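(* Let $\Omega\subsetneq\mathbb{S}^m$ be a domain and $\rho:\Omega\to\mathbb{R}$ a smooth proper function. Then the associated map $\phi:\Omega\to\mathbb{H}^{m+1}$ is proper.
   Context: $\mathbb{S}^m\subset\mathbb{R}^{m+1}$ is the unit sphere with round metric $g_0$; $\nabla$ and $|\cdot|$ denote gradient and norm with respect to $g_0$. Let $\mathbb{L}^{m+2}$ be $\mathbb{R}^{m+2}$ with $\langle\!\langle x,y\rangle\!\rangle=-x_0y_0+\sum_{i=1}^{m+1}x_iy_i$, and $\mathbb{H}^{m+1}=\{x:\langle\!\langle x,x\rangle\!\rangle=-1,\ x_0>0\}$. For $\rho\in C^1(\Omega)$ the associated map $\phi=\phi^\rho:\Omega\to\mathbb{H}^{m+1}$ is $$\phi(x)=\frac{e^{\rho(x)}}{2}\Big(1+e^{-2\rho(x)}\big(1+|\nabla\rho(x)|^2\big)\Big)(1,x)+e^{-\rho(x)}\big(0,-x+\nabla\rho(x)\big).$$ Proper means preimages of compact sets are compact. *)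

(* Defs.v *)
From Stdlib Require Import Reals List.
Open Scope R_scope.

(* Points of R^n are represented as functions nat -> R whose coordinates
   of index >= n vanish (see inRn). *)
Definition vec := nat -> R.

Fixpoint sumR (n : nat) (f : nat -> R) : R :=
  match n with O => 0 | S k => sumR k f + f k end.

Definition inRn (n : nat) (x : vec) : Prop := forall i, (n <= i)%nat -> x i = 0.

Definition dotn (n : nat) (x y : vec) : R := sumR n (fun i => x i * y i).
Definition normn (n : nat) (x : vec) : R := sqrt (dotn n x x).
Definition distn (n : nat) (x y : vec) : R :=
  sqrt (sumR n (fun i => (x i - y i) ^ 2)).

Definition vadd (x y : vec) : vec := fun i => x i + y i.
Definition vscale (a : R) (x : vec) : vec := fun i => a * x i.
Definition evec (i : nat) : vec := fun j => if Nat.eqb i j then 1 else 0.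

Definition balln (n : nat) (p : vec) (eps : R) (y : vec) : Prop :=
  inRn n y /\ distn n p y < eps.

Definition open_n (n : nat) (V : vec -> Prop) : Prop :=
  forall x, V x -> exists eps, 0 < eps /\ forall y, balln n x eps y -> V y.

Definition compact_n (n : nat) (K : vec -> Prop) : Prop :=
  (forall x, K x -> inRn n x) /\
  forall (I : Type) (U : I -> vec -> Prop),
    (forall i, open_n n (U i)) ->
    (forall x, K x -> exists i, U i x) ->
    exists l : list I, forall x, K x -> exists i, In i l /\ U i x.

Definition sphere (m : nat) (x : vec) : Prop :=
  inRn (S m) x /\ dotn (S m) x x = 1.

Definition open_in_sphere (m : nat) (Om : vec -> Prop) : Prop :=
  forall x, Om x -> sphere m x /\
    exists eps, 0 < eps /\ forall y, sphere m y -> distn (S m) x y < eps -> Om y.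

Definition connected_n (n : nat) (Om : vec -> Prop) : Prop :=
  forall A B : vec -> Prop, open_n n A -> open_n n B ->
    (forall x, Om x -> A x \/ B x) ->
    (forall x, Om x -> A x -> B x -> False) ->
    (forall x, Om x -> A x) \/ (forall x, Om x -> B x).

Definition sphere_domain (m : nat) (Om : vec -> Prop) : Prop :=
  (exists x, Om x) /\ open_in_sphere m Om /\ connected_n (S m) Om.

Fixpoint Ck (n k : nat) (U : vec -> Prop) (F : vec -> R) : Prop :=
  match k with
  | O => forall x, U x -> forall e, 0 < e -> exists d, 0 < d /\
           forall y, U y -> distn n x y < d -> Rabs (F y - F x) < e
  | S k' => exists dF : nat -> vec -> R,
      (forall i, (i < n)%nat -> forall x, U x ->
         derivable_pt_lim (fun t => F (vadd x (vscale t (evec i)))) 0 (dF i x)) /\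
      (forall i, (i < n)%nat -> Ck n k' U (dF i))
  end.

Definition smooth_on (n : nat) (U : vec -> Prop) (F : vec -> R) : Prop :=
  forall k, Ck n k U F.

(* rho is smooth on the open subset Om of the submanifold S^m:
   locally it is the restriction of a smooth function on an open ball of R^(m+1). *)
Definition smooth_on_sphere (m : nat) (Om : vec -> Prop) (rho : vec -> R) : Prop :=
  forall p, Om p -> exists eps (F : vec -> R), 0 < eps /\
    smooth_on (S m) (balln (S m) p eps) F /\
    forall y, Om y -> distn (S m) p y < eps -> F y = rho y.

(* G is the gradient of rho on Om w.r.t. the round metric g0:
   G p is tangent at p and d rho_p(v) = <G p, v> for every tangent v,
   the derivative being taken along the curve t |-> (p + t v)/|p + t v| in S^m. *)
Definition sph_gradient (m : nat) (Om : vec -> Prop) (rho : vec -> R) (G : vec -> vec) : Prop :=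
  forall p, Om p ->
    inRn (S m) (G p) /\ dotn (S m) (G p) p = 0 /\
    forall v, inRn (S m) v -> dotn (S m) v p = 0 ->
      derivable_pt_lim
        (fun t => rho (vscale (/ normn (S m) (vadd p (vscale t v))) (vadd p (vscale t v))))
        0 (dotn (S m) (G p) v).

Definition proper_real (m : nat) (Om : vec -> Prop) (rho : vec -> R) : Prop :=
  forall K : R -> Prop, compact K -> compact_n (S m) (fun x => Om x /\ K (rho x)).

(* Hyperbolic space H^(m+1) in Minkowski space L^(m+2) (coordinate 0 timelike) *)
Definition lorentz (m : nat) (x y : vec) : R :=
  - x 0%nat * y 0%nat + sumR (S m) (fun i => x (S i) * y (S i)).

Definition hyperbolic (m : nat) (x : vec) : Prop :=
  inRn (S (S m)) x /\ lorentz m x x = -1 /\ 0 < x 0%nat.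

Definition assoc_map (m : nat) (rho : vec -> R) (G : vec -> vec) (x : vec) : vec :=
  let c := exp (rho x) / 2 *
           (1 + exp (-2 * rho x) * (1 + dotn (S m) (G x) (G x))) in
  fun j => match j with
           | O => c
           | S i => c * x i + exp (- rho x) * (- x i + G x i)
           end.

(* Properness of phi : Om -> H^(m+1) (H with the subspace topology of R^(m+2)) *)
Definition proper_to_hyp (m : nat) (Om : vec -> Prop) (phi : vec -> vec) : Prop :=
  forall K : vec -> Prop, (forall y, K y -> hyperbolic m y) -> compact_n (S (S m)) K ->
    compact_n (S m) (fun x => Om x /\ K (phi x)).

(* Main.v *)
Require Import Defs.
From Stdlib Require Import Reals List Lra Lia Psatz FunctionalExtensionality Classical.
Open Scope R_scope.

Lemma sumR_ext n f g : (forall i, (i < n)%nat -> f i = g i) -> sumR n f = sumR n g.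
Proof. induction n; simpl; intros H; auto. rewrite IHn by (intros; apply H; lia). rewrite H by lia. reflexivity. Qed.
Lemma sumR_plus n f g : sumR n (fun i => f i + g i) = sumR n f + sumR n g.
Proof. induction n; simpl; [ring| rewrite IHn; ring]. Qed.
Lemma sumR_scal n c f : sumR n (fun i => c * f i) = c * sumR n f.
Proof. induction n; simpl; [ring| rewrite IHn; ring]. Qed.
Lemma sumR_le n f g : (forall i, (i<n)%nat -> f i <= g i) -> sumR n f <= sumR n g.
Proof. induction n; simpl; intros H; [lra|]. assert (f n <= g n) by (apply H; lia). assert (sumR n f <= sumR n g) by (apply IHn; intros; apply H; lia). lra. Qed.
Lemma sumR_const n c : sumR n (fun _ => c) = INR n * c.
Proof. induction n; simpl sumR; [simpl; ring| rewrite IHn, S_INR; ring]. Qed.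
Lemma sumR_nonneg n f : (forall i, (i<n)%nat -> 0 <= f i) -> 0 <= sumR n f.
Proof. intros H. rewrite <- (Rmult_0_r (INR n)), <- sumR_const. apply sumR_le. auto. Qed.
Lemma sumR_term n f j : (forall i, (i<n)%nat -> 0 <= f i) -> (j < n)%nat -> f j <= sumR n f.
Proof. induction n; intros H Hj; [lia|]. simpl. destruct (Nat.eq_dec j n).
 - subst. assert (0 <= sumR n f) by (apply sumR_nonneg; intros; apply H; lia). lra.
 - assert (f j <= sumR n f) by (apply IHn; [intros; apply H; lia| lia]). assert (0 <= f n) by (apply H; lia). lra. Qed.
Lemma sumR_abs n f : Rabs (sumR n f) <= sumR n (fun i => Rabs (f i)).
Proof. induction n; simpl. rewrite Rabs_R0; lra. eapply Rle_trans; [apply Rabs_triang|]. lra. Qed.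
Lemma sumR_evec n y j : (j<n)%nat -> sumR n (fun i => y i * evec j i) = y j.
Proof. induction n; intros Hj; [lia|]. simpl. unfold evec at 2. destruct (Nat.eq_dec j n).
 - subst. rewrite Nat.eqb_refl. rewrite (sumR_ext n _ (fun _ => 0)). rewrite sumR_const. ring.
   intros i Hi. unfold evec. destruct (Nat.eqb_spec n i); [lia|]. ring.
 - rewrite IHn by lia. destruct (Nat.eqb_spec j n); [lia|]. ring. Qed.

Lemma sqrt_le_sq X Y : 0 <= Y -> X <= Y*Y -> sqrt X <= Y.
Proof. intros. rewrite <- (sqrt_square Y) by auto. apply sqrt_le_1_alt; auto. Qed.

Lemma distn_nonneg n x y : 0 <= distn n x y.
Proof. apply sqrt_pos. Qed.
Lemma distn_sym n x y : distn n x y = distn n y x.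
Proof. unfold distn. f_equal. apply sumR_ext. intros; ring. Qed.
Lemma distn_refl n x : distn n x x = 0.
Proof. unfold distn. rewrite (sumR_ext n _ (fun _ => 0)). rewrite sumR_const, Rmult_0_r, sqrt_0; auto. intros; ring. Qed.
Lemma coord_le_dist n x y i : (i<n)%nat -> Rabs (x i - y i) <= distn n x y.
Proof. intros Hi. rewrite <- sqrt_Rsqr_abs. apply sqrt_le_1_alt. unfold Rsqr.
 replace ((x i - y i) * (x i - y i)) with ((fun i => (x i - y i)^2) i) by (simpl; ring).
 apply (sumR_term n (fun i => (x i - y i)^2)); auto. intros; apply pow2_ge_0. Qed.

Lemma mink n a b : sqrt (sumR n (fun i => (a i + b i)^2)) <= sqrt (sumR n (fun i => a i ^2)) + sqrt (sumR n (fun i => b i ^2)).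
Proof. induction n. simpl. rewrite sqrt_0; lra.
 cbn [sumR]. set (S0 := sumR n (fun i => (a i + b i)^2)) in *. set (A := sumR n (fun i => a i^2)) in *. set (B := sumR n (fun i => b i^2)) in *.
 assert (HS: 0 <= S0) by (apply sumR_nonneg; intros; apply pow2_ge_0).
 assert (HA: 0 <= A) by (apply sumR_nonneg; intros; apply pow2_ge_0).
 assert (HB: 0 <= B) by (apply sumR_nonneg; intros; apply pow2_ge_0).
 pose proof (sqrt_sqrt S0 HS). pose proof (sqrt_sqrt A HA). pose proof (sqrt_sqrt B HB).
 pose proof (sqrt_pos S0). pose proof (sqrt_pos A). pose proof (sqrt_pos B).
 set (u := sqrt A) in *. set (v := sqrt B) in *. set (s := sqrt S0) in *.
 assert (HP: 0 <= A + a n ^2) by (pose proof (pow2_ge_0 (a n)); lra).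
 assert (HQ: 0 <= B + b n ^2) by (pose proof (pow2_ge_0 (b n)); lra).
 pose proof (sqrt_sqrt _ HP). pose proof (sqrt_sqrt _ HQ). pose proof (sqrt_pos (A + a n^2)). pose proof (sqrt_pos (B + b n^2)).
 set (P := sqrt (A + a n^2)) in *. set (Q := sqrt (B + b n^2)) in *.
 apply sqrt_le_sq. lra.
 assert (Hk: u*v + a n * b n <= P*Q).
 { assert (E: (P*Q)*(P*Q) = (u*u + a n^2)*(v*v+b n^2)) by (replace ((P*Q)*(P*Q)) with ((P*P)*(Q*Q)) by ring; rewrite H5,H6, <- H0, <- H1; ring).
   destruct (Rle_dec (u*v + a n * b n) 0). pose proof (Rmult_le_pos P Q H7 H8). lra.
   assert (0 <= P*Q) by (apply Rmult_le_pos; auto).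
   apply Rsqr_incr_0_var; auto. unfold Rsqr. rewrite E. pose proof (pow2_ge_0 (u * b n - a n * v)). nra. }
 assert (s*s <= (u+v)*(u+v)) by nra.
 replace ((P+Q)*(P+Q)) with (P*P + Q*Q + 2*(P*Q)) by ring. rewrite H5, H6. nra.
Qed.

Lemma distn_triang n x y z : distn n x z <= distn n x y + distn n y z.
Proof. unfold distn. rewrite (sumR_ext n (fun i => (x i - z i)^2) (fun i => ((x i - y i) + (y i - z i))^2)) by (intros; f_equal; ring).
 apply mink. Qed.

Lemma sqrt_l1 n c : sqrt (sumR n (fun i => c i ^2)) <= sumR n (fun i => Rabs (c i)).
Proof. induction n. simpl. rewrite sqrt_0; lra.
 cbn [sumR]. set (S0 := sumR n (fun i => c i^2)) in *. set (T := sumR n (fun i => Rabs (c i))) in *.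
 assert (HS: 0 <= S0) by (apply sumR_nonneg; intros; apply pow2_ge_0).
 assert (HT: 0 <= T) by (apply sumR_nonneg; intros; apply Rabs_pos).
 pose proof (sqrt_sqrt S0 HS). pose proof (sqrt_pos S0). pose proof (Rabs_pos (c n)).
 apply sqrt_le_sq. lra.
 assert (sqrt S0 * sqrt S0 <= T*T) by nra.
 assert (c n ^2 = Rabs (c n) * Rabs (c n)) by (rewrite <- Rabs_mult; simpl; rewrite Rmult_1_r; rewrite Rabs_right; [auto| apply Rle_ge; nra]).
 nra. Qed.

Lemma dist_l1 n x y : distn n x y <= sumR n (fun i => Rabs (x i - y i)).
Proof. apply (sqrt_l1 n (fun i => x i - y i)). Qed.

Lemma dist_box n x y a : (forall i, (i<n)%nat -> Rabs (x i - y i) <= a) -> distn n x y <= INR n * a.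
Proof. intros H. eapply Rle_trans; [apply dist_l1|]. rewrite <- sumR_const. apply sumR_le; auto. Qed.

Lemma distn_zero_eq n x y : inRn n x -> inRn n y -> distn n x y = 0 -> x = y.
Proof. intros Hx Hy H. extensionality i. destruct (Nat.lt_ge_cases i n).
 - pose proof (coord_le_dist n x y i H0). rewrite H in H1. pose proof (Rabs_pos (x i - y i)).
   assert (Rabs (x i - y i) = 0) by lra. destruct (Rcase_abs (x i - y i)); [rewrite Rabs_left in H3 by auto | rewrite Rabs_right in H3 by auto]; lra.
 - rewrite Hx, Hy by auto. reflexivity. Qed.

Definition ctn (N:nat) (P : vec -> Prop) (x:vec) (f : vec -> R) :=
 forall e, 0 < e -> exists d, 0 < d /\ forall z, P z -> distn N x z < d -> Rabs (f z - f x) < e.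

Lemma ctn_const N P x c : ctn N P x (fun _ => c).
Proof. intros e He. exists 1. split; [lra|]. intros. rewrite Rminus_diag, Rabs_R0. auto. Qed.
Lemma ctn_coord N P x i : (i < N)%nat -> ctn N P x (fun z => z i).
Proof. intros Hi e He. exists e. split; auto. intros z _ Hz. rewrite Rabs_minus_sym.
 pose proof (coord_le_dist N x z i Hi). lra. Qed.
Lemma ctn_plus N P x f g : ctn N P x f -> ctn N P x g -> ctn N P x (fun z => f z + g z).
Proof. intros Hf Hg e He. destruct (Hf (e/2)) as [d1 [Hd1 H1]]; [lra|]. destruct (Hg (e/2)) as [d2 [Hd2 H2]]; [lra|].
 exists (Rmin d1 d2). split. apply Rmin_glb_lt; auto. intros z Pz Hz.
 pose proof (H1 z Pz (Rlt_le_trans _ _ _ Hz (Rmin_l _ _))). pose proof (H2 z Pz (Rlt_le_trans _ _ _ Hz (Rmin_r _ _))).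
 replace (f z + g z - (f x + g x)) with ((f z - f x) + (g z - g x)) by ring.
 eapply Rle_lt_trans; [apply Rabs_triang|]. lra. Qed.
Lemma ctn_opp N P x f : ctn N P x f -> ctn N P x (fun z => - f z).
Proof. intros Hf e He. destruct (Hf e He) as [d [Hd H]]. exists d. split; auto. intros z Pz Hz.
 replace (- f z - - f x) with (- (f z - f x)) by ring. rewrite Rabs_Ropp. auto. Qed.
Lemma ctn_mult N P x f g : ctn N P x f -> ctn N P x g -> ctn N P x (fun z => f z * g z).
Proof. intros Hf Hg e He.
 set (a := Rabs (f x)). set (b := Rabs (g x)).
 assert (Ha: 0 <= a) by apply Rabs_pos. assert (Hb: 0 <= b) by apply Rabs_pos.
 destruct (Hf (e / (2 * (b+1)))) as [d1 [Hd1 H1]]. apply Rdiv_lt_0_compat; lra.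
 destruct (Hg (Rmin 1 (e / (2 * (a+1))))) as [d2 [Hd2 H2]]. apply Rmin_glb_lt; [lra| apply Rdiv_lt_0_compat; lra].
 exists (Rmin d1 d2). split. apply Rmin_glb_lt; auto. intros z Pz Hz.
 pose proof (H1 z Pz (Rlt_le_trans _ _ _ Hz (Rmin_l _ _))) as K1. pose proof (H2 z Pz (Rlt_le_trans _ _ _ Hz (Rmin_r _ _))) as K2.
 assert (K3: Rabs (g z - g x) < 1) by (eapply Rlt_le_trans; [apply K2| apply Rmin_l]).
 assert (K4: Rabs (g z - g x) < e / (2*(a+1))) by (eapply Rlt_le_trans; [apply K2| apply Rmin_r]).
 assert (Rabs (g z) <= b + 1). { replace (g z) with (g x + (g z - g x)) by ring. eapply Rle_trans; [apply Rabs_triang|]. unfold b; lra. }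
 replace (f z * g z - f x * g x) with ((f z - f x) * g z + f x * (g z - g x)) by ring.
 eapply Rle_lt_trans; [apply Rabs_triang|]. rewrite !Rabs_mult.
 assert (Rabs (f z - f x) * Rabs (g z) <= e/(2*(b+1)) * (b+1)).
 { apply Rmult_le_compat; try apply Rabs_pos; lra. }
 assert (Rabs (f x) * Rabs (g z - g x) <= (a+1) * (e/(2*(a+1)))).
 { apply Rmult_le_compat; try apply Rabs_pos; unfold a in *; lra. }
 assert (e/(2*(b+1)) * (b+1) = e/2) by (field; lra).
 assert ((a+1) * (e/(2*(a+1))) = e/2) by (field; lra).
 assert (Rabs (f z - f x) * Rabs (g z) < e/2 \/ Rabs (f x) * Rabs (g z - g x) < e/2).
 { destruct (Req_dec (Rabs (g z)) 0). left. rewrite H6, Rmult_0_r; lra.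
   left. assert (0 < Rabs (g z)) by (pose proof (Rabs_pos (g z)); lra).
   apply Rlt_le_trans with (e/(2*(b+1)) * Rabs (g z)). apply Rmult_lt_compat_r; auto.
   apply Rle_trans with (e/(2*(b+1)) * (b+1)). apply Rmult_le_compat_l; [|lra]. left; apply Rdiv_lt_0_compat; lra. lra. }
 destruct H6. lra.
 assert (Rabs (f z - f x) * Rabs (g z) <= e/2) by lra. lra.
Qed.
Lemma ctn_comp N P x f g : continuity_pt g (f x) -> ctn N P x f -> ctn N P x (fun z => g (f z)).
Proof. intros Hg Hf e He. destruct (Hg e He) as [al [Hal Hh]]. destruct (Hf al Hal) as [d [Hd H]].
 exists d. split; auto. intros z Pz Hz. destruct (Req_dec (f z) (f x)) as [E|E].
 rewrite E, Rminus_diag, Rabs_R0; auto.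
 apply (Hh (f z)). split. split; [exact I| auto]. apply H; auto. Qed.
Lemma ctn_sumR N P x n (f : nat -> vec -> R) : (forall i, (i<n)%nat -> ctn N P x (f i)) -> ctn N P x (fun z => sumR n (fun i => f i z)).
Proof. induction n; intros H. exact (ctn_const N P x 0). change (ctn N P x (fun z => sumR n (fun i => f i z) + f n z)).
 apply ctn_plus. apply IHn; intros; apply H; lia. apply H; lia. Qed.
Lemma ctn_ext N P x f g : (exists r, 0 < r /\ forall z, P z -> distn N x z < r -> f z = g z) -> P x -> ctn N P x g -> ctn N P x f.
Proof. intros [r [Hr Hfg]] Px Hg e He. destruct (Hg e He) as [d [Hd H]]. exists (Rmin d r). split. apply Rmin_glb_lt; auto.
 intros z Pz Hz. rewrite (Hfg z Pz), (Hfg x Px). apply H; auto. eapply Rlt_le_trans; [apply Hz| apply Rmin_l].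
 rewrite distn_refl; auto. eapply Rlt_le_trans; [apply Hz| apply Rmin_r]. Qed.
Lemma ctn_ext_all N P x f g : (forall z, f z = g z) -> ctn N P x g -> ctn N P x f.
Proof. intros E H. replace f with g; auto. extensionality z; auto. Qed.

Lemma unif_fin n (Q : nat -> R -> Prop) : (forall i d d', 0 < d' <= d -> Q i d -> Q i d') -> (forall i, (i<n)%nat -> exists d, 0<d /\ Q i d) -> exists d, 0 < d /\ forall i, (i<n)%nat -> Q i d.
Proof. intros Hm. induction n; intros H. exists 1; split; [lra| intros; lia].
 destruct IHn as [d1 [Hd1 H1]]. intros; apply H; lia. destruct (H n) as [d2 [Hd2 H2]]; [lia|].
 exists (Rmin d1 d2). split. apply Rmin_glb_lt; auto. intros i Hi. destruct (Nat.eq_dec i n).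
 subst. apply Hm with d2; auto. split. apply Rmin_glb_lt; auto. apply Rmin_r.
 apply Hm with d1. split. apply Rmin_glb_lt; auto. apply Rmin_l. apply H1; lia. Qed.

Lemma ctn_dist N1 N2 P x (F : vec -> vec) : (forall j, (j < N2)%nat -> ctn N1 P x (fun z => F z j)) ->
  forall e, 0 < e -> exists d, 0 < d /\ forall z, P z -> distn N1 x z < d -> distn N2 (F x) (F z) < e.
Proof. intros H e He. set (eta := e / (INR N2 + 1)). pose proof (pos_INR N2).
 assert (Heta: 0 < eta) by (apply Rdiv_lt_0_compat; lra).
 destruct (unif_fin N2 (fun j d => forall z, P z -> distn N1 x z < d -> Rabs (F z j - F x j) < eta)) as [d [Hd Hu]].
 - intros i d d' Hdd Hq z Pz Hz. apply Hq; auto. lra.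
 - intros i Hi. apply (H i Hi eta Heta).
 - exists d. split; auto. intros z Pz Hz. eapply Rle_lt_trans. apply (dist_box N2 (F x) (F z) eta).
   intros i Hi. rewrite Rabs_minus_sym. left. apply Hu; auto.
   assert ((INR N2 + 1) * eta = e) by (unfold eta; field; lra). nra. Qed.

Lemma compact_closed_sub n (C S : vec -> Prop) : compact_n n C -> (forall x, S x -> C x) ->
  (forall x, C x -> ~ S x -> exists r, 0 < r /\ forall w, balln n x r w -> ~ S w) -> compact_n n S.
Proof.
 intros [HCin HC] HSC Hout. split. intros; apply HCin, HSC; auto.
 intros I U HUo Hcov.
 set (U' := fun (j : I + vec) => match j with inl i => U i | inr x => fun z => exists r, 0 < r /\ (forall w, balln n x r w -> ~ S w) /\ balln n x r z end).
 destruct (HC (I + vec)%type U') as [l Hl].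
 - intros [i|x]; simpl. apply HUo. intros z [r [Hr [Hw [Hzin Hzd]]]]. exists (r - distn n x z). split; [lra|]. intros y [Hyin Hyd]. exists r. repeat split; auto.
   pose proof (distn_triang n x z y). lra.
 - intros x Hx. destruct (classic (S x)). destruct (Hcov x H) as [i Hi]; exists (inl i); auto. destruct (Hout x Hx H) as [r [Hr Hw]]. exists (inr x). simpl. exists r. repeat split; auto. rewrite distn_refl; auto.
 - exists (flat_map (fun j => match j with inl i => i :: nil | inr _ => nil end) l). intros x Hx. destruct (Hl x (HSC x Hx)) as [[i|y] [Hin Hu]].
   exists i; split; auto. apply in_flat_map; exists (inl i); simpl; auto.
   simpl in Hu. destruct Hu as [r [_ [Hw Hb]]]. exfalso; apply (Hw x Hb Hx).
Qed.

Lemma fold_max_ge l r : In r l -> r <= fold_right Rmax 0 l.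
Proof. induction l; simpl; intros H; [contradiction|]. destruct H. subst. apply Rmax_l. eapply Rle_trans; [apply IHl; auto| apply Rmax_r]. Qed.

Lemma compact_bounded0 n K : compact_n n K -> (0 < n)%nat -> exists M, forall z, K z -> z 0%nat < M.
Proof. intros [HKin HK] Hn. destruct (HK R (fun r z => z 0%nat < r)) as [l Hl].
 - intros r z Hz. exists (r - z 0%nat). split; [lra|]. intros y [_ Hy]. pose proof (coord_le_dist n z y 0 Hn).
   pose proof (Rle_abs (y 0%nat - z 0%nat)). rewrite Rabs_minus_sym in H. lra.
 - intros z _. exists (z 0%nat + 1). lra.
 - exists (fold_right Rmax 0 l). intros z Hz. destruct (Hl z Hz) as [r [Hr Hzr]]. pose proof (fold_max_ge l r Hr). lra.
Qed.

Lemma compact_closed_pt n K y : compact_n n K -> inRn n y -> ~ K y -> exists r, 0 < r /\ forall z, K z -> r <= distn n y z.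
Proof. intros [HKin HK] Hy Hny.
 destruct (HK {r : R | 0 < r} (fun r z => proj1_sig r < distn n y z)) as [l Hl].
 - intros [r Hr] z Hz. simpl in *. exists (distn n y z - r). split; [lra|]. intros w [_ Hw].
   pose proof (distn_triang n y w z). rewrite (distn_sym n w z) in H. lra.
 - intros z Hz. assert (0 < distn n y z). { pose proof (distn_nonneg n y z). destruct H; auto.
     exfalso. apply Hny. rewrite (distn_zero_eq n y z); auto. }
   assert (0 < distn n y z / 2) by lra. exists (exist _ _ H0). simpl. lra.
 - set (r0 := fold_right Rmin 1 (map (@proj1_sig _ _) l)).
   assert (Hpos: 0 < r0). { unfold r0. clear Hl. induction l; simpl. lra. apply Rmin_glb_lt; auto. apply (proj2_sig a). }
   assert (Hle: forall r, In r l -> r0 <= proj1_sig r). { unfold r0. clear Hl Hpos r0. induction l; simpl; intros r Hr; [contradiction|].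
     destruct Hr. subst. apply Rmin_l. eapply Rle_trans; [apply Rmin_r| apply IHl; auto]. }
   exists r0. split; auto. intros z Hz. destruct (Hl z Hz) as [r [Hr Hzr]]. pose proof (Hle r Hr). lra.
Qed.

Lemma shift_deriv g c l : derivable_pt_lim (fun t => g (c + t)) 0 l -> derivable_pt_lim g c l.
Proof. intros H eps Heps. destruct (H eps Heps) as [del Hd]. exists del. intros h Hh Hhd.
 specialize (Hd h Hh Hhd). rewrite Rplus_0_l, Rplus_0_r in Hd. exact Hd. Qed.

Lemma mvt_any g g' a : (forall c, Rabs c <= Rabs a -> derivable_pt_lim g c (g' c)) -> exists c, Rabs c <= Rabs a /\ g a - g 0 = g' c * a.
Proof. intros H. destruct (Rtotal_order a 0) as [Ha|[Ha|Ha]].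
 - assert (Hd: forall c, a <= c <= 0 -> derivable_pt_lim g c (g' c)).
   { intros c Hc. apply H. rewrite (Rabs_left a) by lra.
     destruct (Rcase_abs c); [rewrite Rabs_left by lra| rewrite Rabs_right by lra]; lra. }
   destruct (MVT_cor2 g g' a 0 Ha Hd) as [c [Hc1 Hc2]].
   exists c. split. rewrite Rabs_left by lra. rewrite (Rabs_left a) by lra. lra. lra.
 - subst. exists 0. split. right; auto. ring.
 - assert (Hd: forall c, 0 <= c <= a -> derivable_pt_lim g c (g' c)).
   { intros c Hc. apply H. rewrite (Rabs_right a) by lra. rewrite Rabs_right by lra. lra. }
   destruct (MVT_cor2 g g' 0 a Ha Hd) as [c [Hc1 Hc2]].
   exists c. split. rewrite (Rabs_right a) by lra. rewrite Rabs_right by lra. lra. lra.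
Qed.

Lemma taylor n p eps F (dF : nat -> vec -> R) :
 (forall i, (i<n)%nat -> forall x, balln n p eps x -> derivable_pt_lim (fun t => F (vadd x (vscale t (evec i)))) 0 (dF i x)) ->
 (forall i, (i<n)%nat -> Ck n 0 (balln n p eps) (dF i)) ->
 forall x, balln n p eps x -> forall e, 0 < e -> exists d, 0 < d /\ forall h, inRn n h -> (forall i, (i<n)%nat -> Rabs (h i) < d) ->
   balln n p eps (vadd x h) /\ Rabs (F (vadd x h) - F x - sumR n (fun i => dF i x * h i)) <= e * sumR n (fun i => Rabs (h i)).
Proof.
 intros Hpart Hcont x [Hxin Hxd] e He.
 set (r := eps - distn n p x). assert (Hr: 0 < r) by (unfold r; lra).
 destruct (unif_fin n (fun i d => forall y, balln n p eps y -> distn n x y < d -> Rabs (dF i y - dF i x) < e)) as [dl [Hdl Hu]].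
 { intros i d d' Hdd Hq y Hy Hyd. apply Hq; auto. lra. }
 { intros i Hi. apply (Hcont i Hi x (conj Hxin Hxd) e He). }
 pose proof (pos_INR n).
 set (d := Rmin dl r / (INR n + 1)).
 assert (Hm: 0 < Rmin dl r) by (apply Rmin_glb_lt; auto).
 assert (Hd: 0 < d) by (unfold d; apply Rdiv_lt_0_compat; lra).
 assert (Hnd: INR n * d < Rmin dl r).
 { assert ((INR n + 1) * d = Rmin dl r) by (unfold d; field; lra). nra. }
 assert (near: forall w, inRn n w -> (forall i, (i<n)%nat -> Rabs (w i - x i) < d) -> balln n p eps w /\ distn n x w < dl).
 { intros w Hw Hwd. assert (distn n x w <= INR n * d). { apply dist_box. intros i Hi. rewrite Rabs_minus_sym. left; auto. }
   pose proof (Rmin_l dl r). pose proof (Rmin_r dl r). split; [split; auto|]. pose proof (distn_triang n p x w). unfold r in *. lra. lra. }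
 exists d. split; auto. intros h Hh Hhd.
 set (hk := fun k : nat => fun j => if Nat.ltb j k then h j else 0).
 assert (Claim: forall k, (k <= n)%nat -> Rabs (F (vadd x (hk k)) - F x - sumR k (fun i => dF i x * h i)) <= e * sumR k (fun i => Rabs (h i))).
 { induction k; intros Hk.
   - replace (vadd x (hk 0%nat)) with x. simpl sumR. rewrite Rminus_diag, Rminus_0_r, Rabs_R0. lra.
     extensionality j. unfold vadd, hk. destruct (Nat.ltb_spec j 0); [lia|]. ring.
   - specialize (IHk ltac:(lia)). set (z := vadd x (hk k)) in *.
     assert (E1: vadd x (hk (S k)) = vadd z (vscale (h k) (evec k))).
     { extensionality j. unfold z, vadd, vscale, hk, evec. destruct (Nat.ltb_spec j (S k)), (Nat.ltb_spec j k), (Nat.eqb_spec k j); subst; try lia; ring. }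
     assert (Hpt: forall c, Rabs c <= Rabs (h k) -> balln n p eps (vadd z (vscale c (evec k))) /\ distn n x (vadd z (vscale c (evec k))) < dl).
     { intros c Hc. apply near.
       - intros i Hi. unfold z, vadd, vscale, hk, evec. rewrite Hxin by auto. destruct (Nat.ltb_spec i k); [lia|]. destruct (Nat.eqb_spec k i); [lia|]. ring.
       - intros i Hi. unfold z, vadd, vscale, hk, evec. destruct (Nat.ltb_spec i k), (Nat.eqb_spec k i); subst; try lia.
         + replace (x i + h i + c * 0 - x i) with (h i) by ring. auto.
         + replace (x i + 0 + c * 1 - x i) with c by ring. pose proof (Hhd i Hi). lra.
         + replace (x i + 0 + c * 0 - x i) with 0 by ring. rewrite Rabs_R0; auto. }
     destruct (mvt_any (fun t => F (vadd z (vscale t (evec k)))) (fun c => dF k (vadd z (vscale c (evec k)))) (h k)) as [c [Hc Hmv]].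
     { intros c Hc. apply shift_deriv.
       replace (fun t => F (vadd z (vscale (c + t) (evec k)))) with (fun t => F (vadd (vadd z (vscale c (evec k))) (vscale t (evec k)))).
       apply Hpart. lia. apply Hpt; auto.
       extensionality t. f_equal. extensionality j. unfold vadd, vscale. ring. }
     replace (vadd z (vscale 0 (evec k))) with z in Hmv by (extensionality j; unfold vadd, vscale; ring).
     rewrite E1. cbn [sumR].
     destruct (Hpt c Hc) as [Hb Hdist]. pose proof (Hu k ltac:(lia) _ Hb Hdist) as Hdk.
     replace (F (vadd z (vscale (h k) (evec k))) - F x - (sumR k (fun i => dF i x * h i) + dF k x * h k))
       with ((F z - F x - sumR k (fun i => dF i x * h i)) + (dF k (vadd z (vscale c (evec k))) - dF k x) * h k) by lra.
     eapply Rle_trans; [apply Rabs_triang|]. rewrite Rabs_mult.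
     assert (Rabs (dF k (vadd z (vscale c (evec k))) - dF k x) * Rabs (h k) <= e * Rabs (h k)) by (apply Rmult_le_compat_r; [apply Rabs_pos| lra]).
     lra. }
 replace (vadd x h) with (vadd x (hk n)). split.
 - apply near. intros i Hi. unfold vadd, hk. destruct (Nat.ltb_spec i n); [lia|]. rewrite Hxin by auto. ring.
   intros i Hi. unfold vadd, hk. destruct (Nat.ltb_spec i n); [|lia]. replace (x i + h i - x i) with (h i) by ring. auto.
 - apply Claim; lia.
 - extensionality j. unfold vadd, hk. destruct (Nat.ltb_spec j n); auto. rewrite Hh by auto. ring.
Qed.

Lemma div_bound X K t : t <> 0 -> Rabs X <= K * Rabs t -> Rabs (X / t) <= K.
Proof. intros Ht H. unfold Rdiv. rewrite Rabs_mult, Rabs_inv. assert (0 < Rabs t) by (apply Rabs_pos_lt; auto).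
 apply Rmult_le_reg_r with (Rabs t); auto. rewrite Rmult_assoc, Rinv_l by lra. lra. Qed.

Lemma curve_deriv (m : nat) (Om : vec -> Prop) (rho : vec -> R) (p : vec) (eps : R) (F : vec -> R) (dF : nat -> vec -> R)
 (Hos : open_in_sphere m Om)
 (HF : forall y, Om y -> distn (S m) p y < eps -> F y = rho y)
 (Hpart : forall i, (i< S m)%nat -> forall x, balln (S m) p eps x -> derivable_pt_lim (fun t => F (vadd x (vscale t (evec i)))) 0 (dF i x))
 (Hcont : forall i, (i<S m)%nat -> Ck (S m) 0 (balln (S m) p eps) (dF i)) x : Om x -> distn (S m) p x < eps -> forall v, inRn (S m) v -> dotn (S m) v x = 0 ->
 derivable_pt_lim (fun t => rho (vscale (/ normn (S m) (vadd x (vscale t v))) (vadd x (vscale t v)))) 0 (sumR (S m) (fun i => dF i x * v i)).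
Proof.
 set (n := S m). intros Hx Hxd v Hv Hvx.
 destruct (Hos x Hx) as [[Hxin Hxx] [ex [Hex Hexo]]].
 set (a := dotn n v v).
 assert (Haa: 0 <= a) by (unfold a, dotn; apply sumR_nonneg; intros i _; apply Rle_0_sqr).
 assert (Hnorm: forall t, dotn n (vadd x (vscale t v)) (vadd x (vscale t v)) = 1 + t*t*a).
 { intros t. unfold dotn. rewrite (sumR_ext _ _ (fun i => (x i * x i + (2*t) * (v i * x i)) + (t*t) * (v i * v i))) by (intros; unfold vadd, vscale; ring).
   rewrite !sumR_plus, !sumR_scal. fold (dotn n x x). fold (dotn n v x). fold (dotn n v v). fold n in Hxx. rewrite Hxx, Hvx. fold a. ring. }
 set (s := fun t => sqrt (1 + t*t*a)).
 assert (Hs1: forall t, 1 <= s t). { intros t. unfold s. apply Rle_trans with (sqrt 1); [rewrite sqrt_1; lra| apply sqrt_le_1_alt]. assert (0 <= t*t*a) by (apply Rmult_le_pos; [apply Rle_0_sqr|auto]). lra. }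
 assert (Hss: forall t, s t * s t = 1 + t*t*a). { intros t. unfold s. apply sqrt_sqrt. assert (0 <= t*t*a) by (apply Rmult_le_pos; [apply Rle_0_sqr|auto]). lra. }
 assert (Hgam: forall t, vscale (/ normn n (vadd x (vscale t v))) (vadd x (vscale t v)) = fun i => (x i + t * v i) / s t).
 { intros t. unfold normn. rewrite Hnorm. extensionality i. unfold vscale, vadd. fold (s t). pose proof (Hs1 t). field. lra. }
 set (hh := fun t => fun i => (x i + t * v i) / s t - x i).
 assert (Hgh: forall t, (fun i => (x i + t * v i) / s t) = vadd x (hh t)).
 { intros t. extensionality i. unfold vadd, hh. ring. }
 assert (Hxi: forall i, (i<n)%nat -> Rabs (x i) <= 1).
 { intros i Hi. assert (x i * x i <= 1). { fold n in Hxx. rewrite <- Hxx. apply (sumR_term n (fun i => x i * x i)); auto. intros; nra. }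
   destruct (Rcase_abs (x i)); [rewrite Rabs_left| rewrite Rabs_right]; nra. }
 assert (Hvi: forall i, (i<n)%nat -> Rabs (v i) <= 1 + a).
 { intros i Hi. assert (v i * v i <= a). { apply (sumR_term n (fun i => v i * v i)); auto. intros; nra. }
   destruct (Rcase_abs (v i)); [rewrite Rabs_left| rewrite Rabs_right]; nra. }
 set (Cc := (2 + a) * a). assert (HCc: 0 <= Cc) by (unfold Cc; nra).
 assert (Hhb: forall t, Rabs t <= 1 -> forall i, (i<n)%nat -> Rabs (hh t i - t * v i) <= Cc * (t*t)).
 { intros t Ht i Hi. pose proof (Hs1 t). pose proof (Hss t).
   replace (hh t i - t * v i) with ((x i + t * v i) * (1 / s t - 1)) by (unfold hh; field; lra).
   rewrite Rabs_mult. assert (Rabs (x i + t * v i) <= 2 + a).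
   { eapply Rle_trans; [apply Rabs_triang|]. rewrite Rabs_mult. pose proof (Hxi i Hi). pose proof (Hvi i Hi).
     assert (Rabs t * Rabs (v i) <= 1 * (1 + a)) by (apply Rmult_le_compat; auto; apply Rabs_pos). lra. }
   assert (Rabs (1 / s t - 1) <= t * t * a).
   { replace (1 / s t - 1) with (- ((s t - 1) / s t)) by (field; lra). rewrite Rabs_Ropp.
     rewrite Rabs_right. apply Rle_trans with (s t - 1). apply Rmult_le_reg_r with (s t). lra.
     unfold Rdiv. rewrite Rmult_assoc, Rinv_l by lra. nra. nra.
     apply Rle_ge. unfold Rdiv. apply Rmult_le_pos. lra. left; apply Rinv_0_lt_compat; lra. }
   unfold Cc. replace ((2 + a) * a * (t*t)) with ((2+a) * (t*t*a)) by ring. apply Rmult_le_compat; auto; apply Rabs_pos. }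
 set (B := 1 + a + Cc). assert (HB: 0 < B) by (unfold B; lra).
 assert (Hhb2: forall t, Rabs t <= 1 -> forall i, (i<n)%nat -> Rabs (hh t i) <= B * Rabs t).
 { intros t Ht i Hi. pose proof (Hhb t Ht i Hi). pose proof (Hvi i Hi).
   replace (hh t i) with ((hh t i - t * v i) + t * v i) by ring. eapply Rle_trans; [apply Rabs_triang|]. rewrite Rabs_mult.
   assert (Rabs t * Rabs (v i) <= Rabs t * (1+a)) by (apply Rmult_le_compat_l; auto; apply Rabs_pos).
   assert (Et: t * t = Rabs t * Rabs t) by (destruct (Rcase_abs t); [rewrite Rabs_left by lra| rewrite Rabs_right by lra]; ring).
   assert (t * t <= Rabs t) by (pose proof (Rabs_pos t); nra).
   assert (Cc * (t*t) <= Cc * Rabs t) by (apply Rmult_le_compat_l; auto).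
   unfold B. lra. }
 assert (Hhin: forall t, inRn n (hh t)).
 { intros t i Hi. unfold hh. rewrite Hxin, Hv by auto. unfold Rdiv. ring. }
 assert (Hsph: forall t, sphere m (vadd x (hh t))).
 { intros t. rewrite <- Hgh. split. intros i Hi. rewrite Hxin, Hv by auto. unfold Rdiv; ring.
   unfold dotn. pose proof (Hs1 t). rewrite (sumR_ext _ _ (fun i => (/ (s t * s t)) * ((vadd x (vscale t v)) i * (vadd x (vscale t v)) i))).
   rewrite sumR_scal. fold (dotn (S m) (vadd x (vscale t v)) (vadd x (vscale t v))). fold n. rewrite Hnorm, <- Hss. field. lra.
   intros i Hi. unfold vadd, vscale. field. lra. }
 assert (Hg0: vadd x (hh 0) = x).
 { extensionality i. unfold vadd, hh. assert (s 0 = 1) by (unfold s; replace (1 + 0*0*a) with 1 by ring; apply sqrt_1). rewrite H. field. }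
 intros eps0 Heps0.
 set (D := sumR n (fun i => Rabs (dF i x))). assert (HD: 0 <= D) by (apply sumR_nonneg; intros; apply Rabs_pos).
 set (N := INR n). assert (HN: 0 <= N) by apply pos_INR.
 assert (HNB: 0 <= N * B) by (apply Rmult_le_pos; lra).
 set (et := eps0 / (2 * (N*B+1))). assert (Het: 0 < et) by (apply Rdiv_lt_0_compat; lra).
 assert (Hxball: balln n p eps x) by (split; auto).
 destruct (taylor n p eps F dF Hpart Hcont x Hxball et Het) as [dt [Hdt Htay]].
 assert (HDC: 0 <= D * Cc) by (apply Rmult_le_pos; auto).
 set (delta := Rmin 1 (Rmin (dt/(B+1)) (Rmin (ex/(N*B+1)) (eps0/(2*(D*Cc+1)))))).
 assert (Hdelta: 0 < delta).
 { unfold delta. repeat apply Rmin_glb_lt; try lra; apply Rdiv_lt_0_compat; lra. }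
 exists (mkposreal delta Hdelta). intros t Ht0 Htd. simpl in Htd. rewrite Rplus_0_l.
 assert (Ht1: Rabs t < 1) by (eapply Rlt_le_trans; [apply Htd| apply Rmin_l]).
 assert (Ht2: Rabs t < dt/(B+1)) by (eapply Rlt_le_trans; [apply Htd| unfold delta; eapply Rle_trans; [apply Rmin_r| apply Rmin_l]]).
 assert (Ht3: Rabs t < ex/(N*B+1)) by (eapply Rlt_le_trans; [apply Htd| unfold delta; eapply Rle_trans; [apply Rmin_r| eapply Rle_trans; [apply Rmin_r| apply Rmin_l]]]).
 assert (Ht4: Rabs t < eps0/(2*(D*Cc+1))) by (eapply Rlt_le_trans; [apply Htd| unfold delta; eapply Rle_trans; [apply Rmin_r| eapply Rle_trans; [apply Rmin_r| apply Rmin_r]]]).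
 assert (Htpos: 0 < Rabs t) by (apply Rabs_pos_lt; auto).
 assert (Hsmall: forall i, (i<n)%nat -> Rabs (hh t i) < dt).
 { intros i Hi. pose proof (Hhb2 t (Rlt_le _ _ Ht1) i Hi).
   assert ((B+1) * Rabs t < dt). { apply Rmult_lt_reg_r with (/(B+1)). apply Rinv_0_lt_compat; lra.
     replace ((B+1) * Rabs t * /(B+1)) with (Rabs t) by (field; lra). exact Ht2. }
   nra. }
 destruct (Htay (hh t) (Hhin t) Hsmall) as [Hball Htay1].
 assert (Hsum: sumR n (fun i => Rabs (hh t i)) <= N * B * Rabs t).
 { unfold N. rewrite Rmult_assoc, <- sumR_const. apply sumR_le. intros i Hi. apply Hhb2; auto. lra. }
 assert (Hdx: distn (S m) x (vadd x (hh t)) < ex).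
 { eapply Rle_lt_trans. apply dist_l1. fold n. eapply Rle_lt_trans; [| apply (Rle_lt_trans _ ((N*B+1) * Rabs t))].
   eapply Rle_trans; [| apply Hsum]. right. apply sumR_ext. intros i Hi. unfold vadd. rewrite Rabs_minus_sym. f_equal. ring.
   nra. apply Rmult_lt_reg_r with (/(N*B+1)). apply Rinv_0_lt_compat; lra.
   replace ((N*B+1) * Rabs t * /(N*B+1)) with (Rabs t) by (field; lra). exact Ht3. }
 assert (Hom: Om (vadd x (hh t))) by (apply Hexo; auto).
 rewrite Hgam, Hgh, Hgam, Hgh, Hg0.
 rewrite <- (HF _ Hom (proj2 Hball)), <- (HF x Hx Hxd).
 set (T1 := F (vadd x (hh t)) - F x - sumR n (fun i => dF i x * hh t i)).
 set (T2 := sumR n (fun i => dF i x * (hh t i - t * v i))).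
 assert (E2: T2 = sumR n (fun i => dF i x * hh t i) - t * sumR n (fun i => dF i x * v i)).
 { unfold T2. rewrite (sumR_ext n _ (fun i => dF i x * hh t i + (-t) * (dF i x * v i))) by (intros; ring).
   rewrite sumR_plus, sumR_scal. ring. }
 replace ((F (vadd x (hh t)) - F x) / t - sumR n (fun i => dF i x * v i)) with (T1 / t + T2 / t).
 2:{ fold n. rewrite E2. unfold T1. field. auto. }
 assert (B1: Rabs (T1 / t) <= et * (N * B)).
 { apply div_bound; auto. eapply Rle_trans; [apply Htay1|]. rewrite Rmult_assoc. apply Rmult_le_compat_l; lra. }
 assert (B2: Rabs (T2 / t) <= D * Cc * Rabs t).
 { apply div_bound; auto. unfold T2. eapply Rle_trans; [apply sumR_abs|].
   apply Rle_trans with (sumR n (fun i => (Cc * (Rabs t * Rabs t)) * Rabs (dF i x))).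
   apply sumR_le. intros i Hi. rewrite Rabs_mult. rewrite Rmult_comm. apply Rmult_le_compat_r. apply Rabs_pos.
   replace (Rabs t * Rabs t) with (t*t). apply Hhb; auto. lra. destruct (Rcase_abs t); [rewrite Rabs_left by lra| rewrite Rabs_right by lra]; ring.
   rewrite sumR_scal. fold D. right. ring. }
 assert (et * (N*B) < eps0 / 2).
 { unfold et. apply Rmult_lt_reg_r with (2 * (N*B+1)). lra. field_simplify; try lra; nra. }
 assert (D * Cc * Rabs t < eps0 / 2).
 { assert ((D*Cc+1) * Rabs t < eps0/2). { apply Rmult_lt_reg_r with (/(D*Cc+1)). apply Rinv_0_lt_compat; lra.
     replace ((D*Cc+1) * Rabs t * /(D*Cc+1)) with (Rabs t) by (field; lra). replace (eps0/2 * /(D*Cc+1)) with (eps0/(2*(D*Cc+1))) by (field; lra). exact Ht4. }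
   nra. }
 eapply Rle_lt_trans; [apply Rabs_triang|]. lra.
Qed.

Lemma grad_formula (m : nat) (Om : vec -> Prop) (rho : vec -> R) (G : vec -> vec) (p : vec) (eps : R) (F : vec -> R) (dF : nat -> vec -> R)
 (Hos : open_in_sphere m Om)
 (HF : forall y, Om y -> distn (S m) p y < eps -> F y = rho y)
 (Hpart : forall i, (i< S m)%nat -> forall x, balln (S m) p eps x -> derivable_pt_lim (fun t => F (vadd x (vscale t (evec i)))) 0 (dF i x))
 (Hcont : forall i, (i<S m)%nat -> Ck (S m) 0 (balln (S m) p eps) (dF i)) : sph_gradient m Om rho G -> forall x, Om x -> distn (S m) p x < eps -> forall j, (j < S m)%nat ->
   G x j = dF j x - x j * sumR (S m) (fun i => dF i x * x i).
Proof.
 intros Hgrad x Hx Hxd j Hj.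
 destruct (Hos x Hx) as [[Hxin Hxx] _].
 destruct (Hgrad x Hx) as [HGin [HGx HGd]].
 set (v := fun i => evec j i - x j * x i).
 assert (Hv: inRn (S m) v). { intros i Hi. unfold v, evec. destruct (Nat.eqb_spec j i); [lia|]. rewrite (Hxin i Hi). ring. }
 assert (Hvx: dotn (S m) v x = 0).
 { unfold dotn, v. rewrite (sumR_ext _ _ (fun i => x i * evec j i + (- x j) * (x i * x i))) by (intros; ring).
   rewrite sumR_plus, sumR_scal, sumR_evec by auto. fold (dotn (S m) x x). rewrite Hxx. ring. }
 pose proof (uniqueness_limite _ _ _ _ (HGd v Hv Hvx) (curve_deriv m Om rho p eps F dF Hos HF Hpart Hcont x Hx Hxd v Hv Hvx)) as E.
 unfold dotn, v in E.
 rewrite (sumR_ext _ (fun i => G x i * (evec j i - x j * x i)) (fun i => G x i * evec j i + (- x j) * (G x i * x i))) in E by (intros; ring).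
 rewrite (sumR_ext _ (fun i => dF i x * (evec j i - x j * x i)) (fun i => dF i x * evec j i + (- x j) * (dF i x * x i))) in E by (intros; ring).
 rewrite !sumR_plus, !sumR_scal, !sumR_evec in E by auto. fold (dotn (S m) (G x) x) in E. rewrite HGx in E. lra.
Qed.


Lemma ctn_of_Ck0 n P x eps f : Ck n 0 (balln n x eps) f -> 0 < eps -> inRn n x -> (forall z, P z -> inRn n z) -> ctn n P x f.
Proof. intros H He Hx HP e Hee. assert (Hxb: balln n x eps x) by (split; [auto| rewrite distn_refl; auto]). destruct (H x Hxb e Hee) as [d [Hd Hh]].
 exists (Rmin d eps). split. apply Rmin_glb_lt; auto. intros z Pz Hz. apply Hh. split; auto.
 eapply Rlt_le_trans; [apply Hz| apply Rmin_r]. eapply Rlt_le_trans; [apply Hz| apply Rmin_l]. Qed.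

Lemma cont_exp y : continuity_pt exp y.
Proof. apply derivable_continuous_pt, derivable_pt_exp. Qed.

Lemma c_bounds r q : 0 <= q -> exp r / 2 <= exp r / 2 * (1 + exp (-2 * r) * (1 + q)) /\
   exp (- r) / 2 <= exp r / 2 * (1 + exp (-2 * r) * (1 + q)).
Proof. intros Hq. pose proof (exp_pos r). pose proof (exp_pos (-2*r)). pose proof (exp_pos (-r)).
 assert (E: exp r * exp (-2*r) = exp (-r)) by (rewrite <- exp_plus; f_equal; ring).
 replace (exp r / 2 * (1 + exp (-2 * r) * (1 + q))) with (exp r / 2 + exp (-r) * (1+q) / 2) by (rewrite <- E; field).
 split. assert (0 <= exp (-r) * (1+q)) by nra. lra. assert (exp (-r) <= exp (-r) * (1+q)) by nra. lra. Qed.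

Theorem mainTheorem2 (m : nat) (Om : vec -> Prop) (rho : vec -> R) (G : vec -> vec) :
  sphere_domain m Om ->
  (exists x, sphere m x /\ ~ Om x) ->
  smooth_on_sphere m Om rho ->
  proper_real m Om rho ->
  sph_gradient m Om rho G ->
  proper_to_hyp m Om (assoc_map m rho G).
Proof.
 intros Hdom Hnot Hsm Hprop Hgrad K HKh HKc.
 destruct Hdom as [_ [Hos _]].
 assert (HOin: forall z, Om z -> inRn (S m) z) by (intros z Hz; apply (Hos z Hz)).
 assert (Hphin: forall x, Om x -> inRn (S (S m)) (assoc_map m rho G x)).
 { intros x Hx j Hj. destruct j; [lia|]. destruct (Hgrad x Hx) as [HGin _].
   unfold assoc_map. cbv beta iota zeta. rewrite (HOin x Hx j), (HGin j) by lia. ring. }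
 assert (Hq: forall x, 0 <= dotn (S m) (G x) (G x)) by (intros; apply sumR_nonneg; intros; apply Rle_0_sqr).
 destruct (compact_bounded0 _ K HKc) as [M HM]. lia.
 set (M' := Rmax M 1). assert (HM1: 1 <= M') by apply Rmax_r. assert (HMM: M <= M') by apply Rmax_l.
 set (a := - ln (2*M')). set (b := ln (2*M')).
 pose proof (Hprop (fun c => a <= c <= b) (compact_P3 a b)) as HC.
 apply (compact_closed_sub (S m) (fun x => Om x /\ a <= rho x <= b)); auto.
 - intros x [Hx HKx]. split; auto. pose proof (HM _ HKx) as H0.
   unfold assoc_map in H0. cbv beta iota zeta in H0.
   destruct (c_bounds (rho x) _ (Hq x)) as [H1 H2].
   assert (E1: exp (rho x) < 2 * M') by lra.
   assert (E2: exp (- rho x) < 2 * M') by lra.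
   unfold a, b. split.
   + pose proof (ln_increasing _ _ (exp_pos (- rho x)) E2) as H5. rewrite ln_exp in H5. lra.
   + pose proof (ln_increasing _ _ (exp_pos (rho x)) E1) as H5. rewrite ln_exp in H5. lra.
 - intros x [Hx _] HnS.
   assert (HnK: ~ K (assoc_map m rho G x)) by (intro; apply HnS; split; auto).
   destruct (compact_closed_pt _ K _ HKc (Hphin x Hx) HnK) as [r [Hr Hrk]].
   assert (Hxin: inRn (S m) x) by auto.
   destruct (Hsm x Hx) as [eps [F [Heps [Hsmooth HF]]]].
   pose proof (Hsmooth 0%nat) as HF0. pose proof (Hsmooth 1%nat) as HF1. simpl in HF1.
   destruct HF1 as [dF [Hpart Hcont]].
   assert (Hrho: ctn (S m) Om x rho).
   { apply (ctn_ext _ _ _ rho F). exists eps. split; auto. intros z Hz Hzd. symmetry; apply HF; auto. auto.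
     apply (ctn_of_Ck0 _ _ _ eps); auto. }
   assert (HdF: forall i, (i < S m)%nat -> ctn (S m) Om x (dF i)).
   { intros i Hi. apply (ctn_of_Ck0 _ _ _ eps); auto. exact (Hcont i Hi). }
   assert (HG: forall j, (j < S m)%nat -> ctn (S m) Om x (fun z => G z j)).
   { intros j Hj. apply (ctn_ext _ _ _ _ (fun z => dF j z + - (z j * sumR (S m) (fun i => dF i z * z i)))).
     exists eps. split; auto. intros z Hz Hzd. rewrite (grad_formula m Om rho G x eps F dF Hos HF Hpart Hcont Hgrad z Hz Hzd j Hj). ring.
     auto.
     apply ctn_plus. auto. apply ctn_opp. apply ctn_mult. apply ctn_coord; auto. apply ctn_sumR. intros i Hi. apply ctn_mult; auto. apply ctn_coord; auto. }
   assert (Hc: ctn (S m) Om x (fun z => exp (rho z) / 2 * (1 + exp (-2 * rho z) * (1 + dotn (S m) (G z) (G z))))).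
   { apply ctn_mult. unfold Rdiv. apply ctn_mult. apply (ctn_comp _ _ _ rho exp); auto. apply cont_exp. apply ctn_const.
     apply ctn_plus. apply ctn_const. apply ctn_mult. apply (ctn_comp _ _ _ (fun z => -2 * rho z) exp). apply cont_exp.
     apply ctn_mult; auto. apply ctn_const. apply ctn_plus. apply ctn_const. unfold dotn. apply ctn_sumR. intros i Hi. apply ctn_mult; auto. }
   assert (Hcts: forall j, (j < S (S m))%nat -> ctn (S m) Om x (fun z => assoc_map m rho G z j)).
   { intros j Hj. unfold assoc_map. cbv beta iota zeta. destruct j. exact Hc.
     apply ctn_plus. apply ctn_mult. exact Hc. apply ctn_coord; lia.
     apply ctn_mult. apply (ctn_comp _ _ _ (fun z => - rho z) exp). apply cont_exp. apply ctn_opp; auto.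
     apply ctn_plus. apply ctn_opp. apply ctn_coord; lia. apply HG; lia. }
   destruct (ctn_dist (S m) (S (S m)) Om x (assoc_map m rho G) Hcts r Hr) as [d [Hd Hdd]].
   exists d. split; auto. intros w [Hwin Hwd] [Hw HKw]. pose proof (Hrk _ HKw). pose proof (Hdd w Hw Hwd). lra.
Qed.
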